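(* Let $P$ be a closed program (i.e. all free variables of $P$ have region types $\mathrm{Reg}_rA$ in the typing context) which is typable in the affine-intuitionistic type system with regions (i.e. $R;\Gamma\vdash P:\alpha$ for some $R,\Gamma,\alpha$) and such that there is no $P'$ with $P\to P'$. Then $P$ is structurally equivalent to a program $\nu x_1\cdots\nu x_m\,(M_1\mid\cdots\mid M_n\mid S_1\mid\cdots\mid S_p)$ with $m,n,p\ge 0$, where each $S_j$ is a store item and each $M_i$ is either a value or can be uniquely decomposed as $E[\mathsf{get}(y)]$ for an evaluation context $E$ and an address $y$ such that no value is associated with $y$ in the stores $S_1,\dots,S_p$ (i.e. none of them is $(y\leftarrow V)$ or $(y\Leftarrow V)$).
   Context: Syntax. Variables $x,y,\dots$. Values $V ::= * \mid x \mid \lambda x.M \mid\ !V$. Terms $M ::= V \mid MM \mid\ !M \mid \mathsf{let}\ !x = M\ \mathsf{in}\ M \mid \nu x\,M \mid \mathsf{set}(x,V) \mid \mathsf{pset}(x,V) \mid \mathsf{get}(x) \mid (M\mid M)$. Stores $S ::= (x\leftarrow V) \mid (x \Leftarrow V) \mid (S\mid S)$ (volatile resp. persistent store items). Programs $P ::= M \mid S \mid (P\mid P) \mid \nu x\,P$. The binders $\lambda x$, $\nu x$, $\mathsf{let}\ !x$ bind $x$. Evaluation contexts $E ::= [\,] \mid EM \mid VE \mid\ !E \mid \mathsf{let}\ !x = E\ \mathsf{in}\ M$; static contexts $C ::= [\,] \mid (C\mid P)\mid (P\mid C)\mid \nu x\,C$. Structural equivalence $\equiv$ is the least equivalence on programs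 closed under static contexts and containing $\alpha$-renaming, $P\mid P'\equiv P'\mid P$, $(P\mid P')\mid P''\equiv P\mid(P'\mid P'')$, $(\nu x\,P)\mid P'\equiv \nu x(P\mid P')$ if $x\notin FV(P')$, and $E[\nu x\,M]\equiv \nu x\,E[M]$ if $x\notin FV(E)$. Reduction: $P\to P'$ iff $P\equiv C[\Delta]$ and $P'\equiv C[\Delta']$ for some static context $C$ and basic step $\Delta\to\Delta'$ among: $E[(\lambda x.M)V]\to E[[V/x]M]$; $E[\mathsf{let}\ !x=\,!V\ \mathsf{in}\ M]\to E[[V/x]M]$; $E[\mathsf{set}(x,V)]\to E[*]\mid(x\leftarrow V)$; $E[\mathsf{pset}(x,V)]\to E[*]\mid(x\Leftarrow V)$; $E[\mathsf{get}(x)]\mid(x\leftarrow V)\to E[V]$; $E[\mathsf{get}(x)]\mid(x\Leftarrow\, !V)\to E[!V]\mid(x\Leftarrow\, !V)$. Types. Regions $r,r',\dots$ are each either volatile or persistent. Types $\alpha ::= \mathbf{B}\mid A$, value-types $A ::= \mathbf{1}\mid A\multimap\alpha \mid\ !A\mid \mathrm{Reg}_r A$. Usages: on $\{0,1,\infty\}$ the partial sum $\uplus$ has $a\uplus 0=0\uplus a=a$, $\infty\uplus\infty=\infty$, undefined otherwise. A context is $\Gamma = x_1:(u_1,A_1),\dots,x_n:(u_n,A_n)$ with distinct $x_i$, $u_i\in\{1,\infty\}$. A region usage $U=(v,v')$ (output, input) lies in one of the three sets $\{(\infty,\infty)\}$, $\{(1,\infty),(0,\infty)\}$, $\{(0,0),(1,0),(0,1),(1,1)\}$;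 $U_1\uplus U_2$ is defined iff both lie in the same set and the componentwise sum is defined. A region context is $R=r_1:(U_1,A_1),\dots,r_n:(U_n,A_n)$ with distinct $r_i$. Sums of contexts and of region contexts are componentwise (domains of region contexts implicitly equalized with neutral usages $(\infty,\infty)$, $(0,\infty)$, $(0,0)$). Well-formedness: $R\vdash$ holds iff every region name occurring in the types of $R$ is in $\mathrm{dom}(R)$ and every occurrence of $\mathrm{Reg}_{r_i}B$ in them has $B=A_i$; $R\vdash\alpha$ iff $R\vdash$ and the same conditions hold for $\alpha$; $R\vdash\Gamma$ iff $R\vdash A$ for all $x:(u,A)\in\Gamma$. $\mathrm{aff}(x:(u,A))$ iff $u=1$; $\mathrm{aff}(r:((v,v'),A))$ iff $1\in\{v,v'\}$ or ($r$ volatile and $v'\neq 0$); $\mathrm{aff}(R;\Gamma)$: some hypothesis satisfies $\mathrm{aff}$; $\mathrm{saff}(R;\Gamma)$: all do. Typing rules for $R;\Gamma\vdash P:\alpha$: (var) $R\vdash\Gamma$, $x:(u,A)\in\Gamma$ gives $R;\Gamma\vdash x:A$. (unit) $R\vdash\Gamma$ gives $R;\Gamma\vdash *:\mathbf{1}$. (abs) $R;\Gamma,x:(1,A)\vdash M:\alpha$ gives $R;\Gamma\vdash\lambda x.M:A\multimap\alpha$. (app) $R_1;\Gamma_1\vdash M:A\multimap\alpha$, $R_2;\Gamma_2\vdash N:A$ give $R_1\uplus R_2;\Gamma_1\uplus\Gamma_2\vdash MN:\alpha$. (prom) $R\uplus R'\vdash\Gamma\uplus\Gamma'$, $\mathrm{saff}(R';\Gamma')$,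 $R;\Gamma\vdash M:A$, $\neg\mathrm{aff}(R;\Gamma)$ give $R\uplus R';\Gamma\uplus\Gamma'\vdash\, !M:\,!A$. (let) $R_1;\Gamma_1\vdash M:\,!A$, $R_2;\Gamma_2,x:(\infty,A)\vdash N:\alpha$ give $R_1\uplus R_2;\Gamma_1\uplus\Gamma_2\vdash \mathsf{let}\ !x=M\ \mathsf{in}\ N:\alpha$. (new) $R;\Gamma,x:(u,\mathrm{Reg}_rA)\vdash P:\alpha$ gives $R;\Gamma\vdash\nu x\,P:\alpha$. (get) $R\vdash\Gamma$, $x:(u,\mathrm{Reg}_rA)\in\Gamma$, $r:((v,v'),A)\in R$, $v'\neq0$ give $R;\Gamma\vdash\mathsf{get}(x):A$. (set) $\Gamma=x:(u,\mathrm{Reg}_rA)\uplus\Gamma'$, $r$ volatile, $R=r:((v,v'),A)\uplus R'$, $v\neq0$, $R\vdash\Gamma$, $R';\Gamma'\vdash V:A$ give $R;\Gamma\vdash\mathsf{set}(x,V):\mathbf{1}$ and, with the same premises, $R;\Gamma\vdash(x\leftarrow V):\mathbf{B}$. (pset) $\Gamma=x:(u,\mathrm{Reg}_r!A)\uplus\Gamma'$, $r$ persistent, $R=r:((v,v'),!A)\uplus R'$, $v\neq0$, $R\vdash\Gamma$, $R';\Gamma'\vdash V:\,!A$ give $R;\Gamma\vdash\mathsf{pset}(x,V):\mathbf{1}$ and, with the same premises, $R;\Gamma\vdash(x\Leftarrow V):\mathbf{B}$. (par-store) $R_1;\Gamma_1\vdash P:\alpha$, $R_2;\Gamma_2\vdash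 S:\mathbf{B}$ with $S$ a store give $R_1\uplus R_2;\Gamma_1\uplus\Gamma_2\vdash(P\mid S):\alpha$, likewise $(S\mid P)$. (par) $R_i;\Gamma_i\vdash P_i:\alpha_i$, $P_i$ not a store ($i=1,2$) give $R_1\uplus R_2;\Gamma_1\uplus\Gamma_2\vdash(P_1\mid P_2):\mathbf{B}$. *)

(* Defs.v *)
(* Affine-intuitionistic lambda-calculus with regions,
   formalized with de Bruijn indices for the binders lambda x, nu x and
   let !x (so alpha-renaming is syntactic identity). *)
From Stdlib Require Import List Arith PeanoNat Bool.
Import ListNotations.

(* Syntax (raw).  Addresses in set/pset/get/stores are terms; the grammar
   predicates below require them to be variables. *)
Inductive tm : Type :=
  | Unit : tm
  | Var : nat -> tm
  | Lam : tm -> tm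
  | Bang : tm -> tm
  | App : tm -> tm -> tm
  | Let : tm -> tm -> tm            (* let !x = M in N  (x bound in N) *)
  | Nu : tm -> tm
  | SetT : tm -> tm -> tm
  | PSetT : tm -> tm -> tm
  | Get : tm -> tm
  | Par : tm -> tm -> tm
  | Sto : tm -> tm -> tm
  | PSto : tm -> tm -> tm.

Inductive value : tm -> Prop :=
  | v_unit : value Unit
  | v_var : forall x, value (Var x)
  | v_lam : forall M, term M -> value (Lam M)
  | v_bang : forall V, value V -> value (Bang V)
with term : tm -> Prop :=
  | t_val : forall V, value V -> term V
  | t_app : forall M N, term M -> term N -> term (App M N)
  | t_bang : forall M, term M -> term (Bang M)
  | t_let : forall M N, term M -> term N -> term (Let M N)
  | t_nu : forall M, term M -> term (Nu M)
  | t_set : forall x V, value V -> term (SetT (Var x) V)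
  | t_pset : forall x V, value V -> term (PSetT (Var x) V)
  | t_get : forall x, term (Get (Var x))
  | t_par : forall M N, term M -> term N -> term (Par M N).

Inductive store : tm -> Prop :=
  | s_vol : forall x V, value V -> store (Sto (Var x) V)
  | s_pers : forall x V, value V -> store (PSto (Var x) V)
  | s_par : forall S1 S2, store S1 -> store S2 -> store (Par S1 S2).

Definition store_item (S : tm) : Prop :=
  exists x V, value V /\ (S = Sto (Var x) V \/ S = PSto (Var x) V).

Inductive program : tm -> Prop :=
  | p_term : forall M, term M -> program M
  | p_store : forall S, store S -> program S
  | p_par : forall P Q, program P -> program Q -> program (Par P Q)
  | p_nu : forall P, program P -> program (Nu P).

Fixpoint lift (c : nat) (t : tm) : tm :=
  match t with
  | Unit => Unit
  | Var n => if n <? c then Var n else Var (S n)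
  | Lam M => Lam (lift (S c) M)
  | Bang M => Bang (lift c M)
  | App M N => App (lift c M) (lift c N)
  | Let M N => Let (lift c M) (lift (S c) N)
  | Nu M => Nu (lift (S c) M)
  | SetT x V => SetT (lift c x) (lift c V)
  | PSetT x V => PSetT (lift c x) (lift c V)
  | Get x => Get (lift c x)
  | Par M N => Par (lift c M) (lift c N)
  | Sto x V => Sto (lift c x) (lift c V)
  | PSto x V => PSto (lift c x) (lift c V)
  end.

(* subst j s t = [s / j] t, removing variable j (indices above j decrease) *)
Fixpoint subst (j : nat) (s : tm) (t : tm) : tm :=
  match t with
  | Unit => Unit
  | Var n => if n =? j then s else if j <? n then Var (pred n) else Var n
  | Lam M => Lam (subst (S j) (lift 0 s) M)
  | Bang M => Bang (subst j s M)
  | App M N => App (subst j s M) (subst j s N)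
  | Let M N => Let (subst j s M) (subst (S j) (lift 0 s) N)
  | Nu M => Nu (subst (S j) (lift 0 s) M)
  | SetT x V => SetT (subst j s x) (subst j s V)
  | PSetT x V => PSetT (subst j s x) (subst j s V)
  | Get x => Get (subst j s x)
  | Par M N => Par (subst j s M) (subst j s N)
  | Sto x V => Sto (subst j s x) (subst j s V)
  | PSto x V => PSto (subst j s x) (subst j s V)
  end.

(* [V/x]M where x is the variable bound by the enclosing binder *)
Definition subst0 (V M : tm) : tm := subst 0 V M.

Fixpoint occurs_free (n : nat) (t : tm) : Prop :=
  match t with
  | Unit => False
  | Var m => m = n
  | Lam M => occurs_free (S n) M
  | Bang M => occurs_free n M
  | App M N => occurs_free n M \/ occurs_free n N
  | Let M N => occurs_free n M \/ occurs_free (S n) N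
  | Nu M => occurs_free (S n) M
  | SetT x V | PSetT x V | Sto x V | PSto x V =>
      occurs_free n x \/ occurs_free n V
  | Get x => occurs_free n x
  | Par M N => occurs_free n M \/ occurs_free n N
  end.

Inductive ectx : Type :=
  | EHole : ectx
  | EAppL : ectx -> tm -> ectx
  | EAppR : tm -> ectx -> ectx
  | EBang : ectx -> ectx
  | ELet : ectx -> tm -> ectx.

Fixpoint plug (E : ectx) (t : tm) : tm :=
  match E with
  | EHole => t
  | EAppL E M => App (plug E t) M
  | EAppR V E => App V (plug E t)
  | EBang E => Bang (plug E t)
  | ELet E M => Let (plug E t) M
  end.

Fixpoint ectx_ok (E : ectx) : Prop :=
  match E with
  | EHole => True
  | EAppL E M => ectx_ok E /\ term M
  | EAppR V E => value V /\ ectx_ok E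
  | EBang E => ectx_ok E
  | ELet E M => ectx_ok E /\ term M
  end.

(* lifting an evaluation context (the hole is not under a binder) *)
Fixpoint lift_ectx (c : nat) (E : ectx) : ectx :=
  match E with
  | EHole => EHole
  | EAppL E M => EAppL (lift_ectx c E) (lift c M)
  | EAppR V E => EAppR (lift c V) (lift_ectx c E)
  | EBang E => EBang (lift_ectx c E)
  | ELet E M => ELet (lift_ectx c E) (lift (S c) M)
  end.

Inductive sctx : Type :=
  | SHole : sctx
  | SParL : sctx -> tm -> sctx
  | SParR : tm -> sctx -> sctx
  | SNu : sctx -> sctx.

Fixpoint splug (C : sctx) (t : tm) : tm :=
  match C with
  | SHole => t
  | SParL C P => Par (splug C t) P
  | SParR P C => Par P (splug C t)
  | SNu C => Nu (splug C t)
  end.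

(* Structural equivalence (alpha-renaming is identity in de Bruijn;
   side conditions x notin FV(.) are realized by lifting). *)
Inductive steq : tm -> tm -> Prop :=
  | eq_refl : forall P, steq P P
  | eq_sym : forall P Q, steq P Q -> steq Q P
  | eq_trans : forall P Q R, steq P Q -> steq Q R -> steq P R
  | eq_parL : forall P P' Q, steq P P' -> steq (Par P Q) (Par P' Q)
  | eq_parR : forall P Q Q', steq Q Q' -> steq (Par P Q) (Par P Q')
  | eq_nu : forall P P', steq P P' -> steq (Nu P) (Nu P')
  | eq_comm : forall P Q, steq (Par P Q) (Par Q P)
  | eq_assoc : forall P Q R, steq (Par (Par P Q) R) (Par P (Par Q R))
  | eq_extr : forall P Q, steq (Par (Nu P) Q) (Nu (Par P (lift 0 Q)))
  | eq_ectx : forall E M, ectx_ok E ->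
      steq (plug E (Nu M)) (Nu (plug (lift_ectx 0 E) M)).

Inductive basic : tm -> tm -> Prop :=
  | b_beta : forall E M V, ectx_ok E -> value V ->
      basic (plug E (App (Lam M) V)) (plug E (subst0 V M))
  | b_let : forall E M V, ectx_ok E -> value V ->
      basic (plug E (Let (Bang V) M)) (plug E (subst0 V M))
  | b_set : forall E x V, ectx_ok E -> value V ->
      basic (plug E (SetT x V)) (Par (plug E Unit) (Sto x V))
  | b_pset : forall E x V, ectx_ok E -> value V ->
      basic (plug E (PSetT x V)) (Par (plug E Unit) (PSto x V))
  | b_get : forall E x V, ectx_ok E -> value V ->
      basic (Par (plug E (Get x)) (Sto x V)) (plug E V)
  | b_pget : forall E x V, ectx_ok E -> value V ->
      basic (Par (plug E (Get x)) (PSto x (Bang V)))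
            (Par (plug E (Bang V)) (PSto x (Bang V))).

Definition red (P P' : tm) : Prop :=
  exists C D D', basic D D' /\ steq P (splug C D) /\ steq P' (splug C D').

Inductive kind : Type := Volatile | Persistent.
(* a region name, together with its (fixed) kind *)
Definition region : Type := (nat * kind)%type.
Definition kind_eqb (a b : kind) : bool :=
  match a, b with
  | Volatile, Volatile | Persistent, Persistent => true
  | _, _ => false
  end.
Definition region_eqb (r s : region) : bool :=
  Nat.eqb (fst r) (fst s) && kind_eqb (snd r) (snd s).
Definition volatile (r : region) : Prop := snd r = Volatile.
Definition persistent (r : region) : Prop := snd r = Persistent.

Inductive vty : Type :=
  | TUnit : vty
  | TArr : vty -> ty -> vty
  | TBang : vty -> vty
  | TReg : region -> vty -> vty
with ty : Type :=
  | TB : ty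
  | TV : vty -> ty.

Inductive use3 : Type := Z0 | One | Inf.

Inductive usage : Type := U1 | UInf.
Definition usum (a b : usage) : option usage :=
  match a, b with UInf, UInf => Some UInf | _, _ => None end.

(* region usages (v,v'), lying in one of the three sets
   {(oo,oo)}, {(1,oo),(0,oo)}, {(0,0),(1,0),(0,1),(1,1)} *)
Inductive rusage : Type :=
  | RInf : rusage                    (* (oo,oo) *)
  | RHalf : bool -> rusage           (* (v,oo), v = 1 iff true *)
  | RFin : bool -> bool -> rusage.   (* (v,v'), v,v' in {0,1} *)

Definition b2u (b : bool) : use3 := if b then One else Z0.
Definition r_out (U : rusage) : use3 :=
  match U with RInf => Inf | RHalf b => b2u b | RFin o _ => b2u o end.
Definition r_in (U : rusage) : use3 :=
  match U with RInf => Inf | RHalf _ => Inf | RFin _ i => b2u i end.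

Definition rusum (X1 X2 : rusage) : option rusage :=
  match X1, X2 with
  | RInf, RInf => Some RInf
  | RHalf a, RHalf b => if a && b then None else Some (RHalf (a || b))
  | RFin o1 i1, RFin o2 i2 =>
      if (o1 && o2) || (i1 && i2) then None else Some (RFin (o1 || o2) (i1 || i2))
  | _, _ => None
  end.

(* typing contexts: position n = variable of de Bruijn index n;
   None = variable not in the domain *)
Definition ctx : Type := list (option (usage * vty)).
Definition clookup (G : ctx) (n : nat) : option (usage * vty) :=
  match nth_error G n with Some o => o | None => None end.
Definition csingle (x : nat) (e : usage * vty) : ctx := repeat None x ++ [Some e].

Definition osum_c (a b c : option (usage * vty)) : Prop :=
  match a, b with
  | None, None => c = None
  | Some e, None => c = Some e
  | None, Some e => c = Some e
  | Some (u1, A1), Some (u2, A2) =>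
      A1 = A2 /\ exists u, usum u1 u2 = Some u /\ c = Some (u, A1)
  end.
Definition csum (G1 G2 G : ctx) : Prop :=
  forall n, osum_c (clookup G1 n) (clookup G2 n) (clookup G n).

(* region contexts (first binding of a region name counts) *)
Definition rctx : Type := list (region * (rusage * vty)).
Fixpoint rlookup (R : rctx) (r : region) : option (rusage * vty) :=
  match R with
  | [] => None
  | (s, e) :: R' => if region_eqb s r then Some e else rlookup R' r
  end.

Definition osum_r (a b c : option (rusage * vty)) : Prop :=
  match a, b with
  | None, None => c = None
  | Some e, None => c = Some e
  | None, Some e => c = Some e
  | Some (X1, A1), Some (X2, A2) =>
      A1 = A2 /\ exists U, rusum X1 X2 = Some U /\ c = Some (U, A1)
  end.
Definition rsum (R1 R2 R : rctx) : Prop :=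
  forall r, osum_r (rlookup R1 r) (rlookup R2 r) (rlookup R r).

Fixpoint wf_vty (R : rctx) (A : vty) : Prop :=
  match A with
  | TUnit => True
  | TArr A a => wf_vty R A /\ wf_ty R a
  | TBang A => wf_vty R A
  | TReg r B => (exists U, rlookup R r = Some (U, B)) /\ wf_vty R B
  end
with wf_ty (R : rctx) (a : ty) : Prop :=
  match a with
  | TB => True
  | TV A => wf_vty R A
  end.

Definition wf_rctx (R : rctx) : Prop :=
  forall r U A, rlookup R r = Some (U, A) -> wf_vty R A.
Definition wf_ctx (R : rctx) (G : ctx) : Prop :=
  wf_rctx R /\ forall x u A, clookup G x = Some (u, A) -> wf_vty R A.

Definition raff (r : region) (U : rusage) : Prop :=
  r_out U = One \/ r_in U = One \/ (volatile r /\ r_in U <> Z0).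
Definition aff (R : rctx) (G : ctx) : Prop :=
  (exists r U A, rlookup R r = Some (U, A) /\ raff r U) \/
  (exists x A, clookup G x = Some (U1, A)).
Definition saff (R : rctx) (G : ctx) : Prop :=
  (forall r U A, rlookup R r = Some (U, A) -> raff r U) /\
  (forall x u A, clookup G x = Some (u, A) -> u = U1).

Inductive typed : rctx -> ctx -> tm -> ty -> Prop :=
  | ty_var : forall R G x u A,
      wf_ctx R G -> clookup G x = Some (u, A) -> typed R G (Var x) (TV A)
  | ty_unit : forall R G, wf_ctx R G -> typed R G Unit (TV TUnit)
  | ty_abs : forall R G M A a,
      typed R (Some (U1, A) :: G) M a -> typed R G (Lam M) (TV (TArr A a))
  | ty_app : forall R1 R2 R G1 G2 G M N A a,
      typed R1 G1 M (TV (TArr A a)) -> typed R2 G2 N (TV A) ->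
      rsum R1 R2 R -> csum G1 G2 G -> typed R G (App M N) a
  | ty_prom : forall R R' Rs G G' Gs M A,
      rsum R R' Rs -> csum G G' Gs -> wf_ctx Rs Gs -> saff R' G' ->
      typed R G M (TV A) -> ~ aff R G -> typed Rs Gs (Bang M) (TV (TBang A))
  | ty_let : forall R1 R2 R G1 G2 G M N A a,
      typed R1 G1 M (TV (TBang A)) -> typed R2 (Some (UInf, A) :: G2) N a ->
      rsum R1 R2 R -> csum G1 G2 G -> typed R G (Let M N) a
  | ty_new : forall R G P u r A a,
      typed R (Some (u, TReg r A) :: G) P a -> typed R G (Nu P) a
  | ty_get : forall R G x u r A U,
      wf_ctx R G -> clookup G x = Some (u, TReg r A) ->
      rlookup R r = Some (U, A) -> r_in U <> Z0 ->
      typed R G (Get (Var x)) (TV A)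
  | ty_set : forall R R' G G' x u r A U V,
      csum (csingle x (u, TReg r A)) G' G -> volatile r ->
      rsum [(r, (U, A))] R' R -> r_out U <> Z0 -> wf_ctx R G ->
      typed R' G' V (TV A) -> typed R G (SetT (Var x) V) (TV TUnit)
  | ty_sto : forall R R' G G' x u r A U V,
      csum (csingle x (u, TReg r A)) G' G -> volatile r ->
      rsum [(r, (U, A))] R' R -> r_out U <> Z0 -> wf_ctx R G ->
      typed R' G' V (TV A) -> typed R G (Sto (Var x) V) TB
  | ty_pset : forall R R' G G' x u r A U V,
      csum (csingle x (u, TReg r (TBang A))) G' G -> persistent r ->
      rsum [(r, (U, TBang A))] R' R -> r_out U <> Z0 -> wf_ctx R G ->
      typed R' G' V (TV (TBang A)) -> typed R G (PSetT (Var x) V) (TV TUnit)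
  | ty_psto : forall R R' G G' x u r A U V,
      csum (csingle x (u, TReg r (TBang A))) G' G -> persistent r ->
      rsum [(r, (U, TBang A))] R' R -> r_out U <> Z0 -> wf_ctx R G ->
      typed R' G' V (TV (TBang A)) -> typed R G (PSto (Var x) V) TB
  | ty_par_storeR : forall R1 R2 R G1 G2 G P S a,
      typed R1 G1 P a -> typed R2 G2 S TB -> store S ->
      rsum R1 R2 R -> csum G1 G2 G -> typed R G (Par P S) a
  | ty_par_storeL : forall R1 R2 R G1 G2 G P S a,
      typed R1 G1 P a -> typed R2 G2 S TB -> store S ->
      rsum R1 R2 R -> csum G1 G2 G -> typed R G (Par S P) a
  | ty_par : forall R1 R2 R G1 G2 G P1 P2 a1 a2,
      typed R1 G1 P1 a1 -> typed R2 G2 P2 a2 -> ~ store P1 -> ~ store P2 ->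
      rsum R1 R2 R -> csum G1 G2 G -> typed R G (Par P1 P2) TB.

Fixpoint nu_n (m : nat) (P : tm) : tm :=
  match m with 0 => P | S k => Nu (nu_n k P) end.

(* P1 | ... | Pk  (right-nested; only used on nonempty lists) *)
Fixpoint par_list (l : list tm) : tm :=
  match l with
  | [] => Unit
  | [P] => P
  | P :: l' => Par P (par_list l')
  end.

(* Main.v *)
Require Import Defs.
From Stdlib Require Import List Arith PeanoNat Bool Lia Permutation.
Import ListNotations.

Scheme value_mut := Induction for value Sort Prop
with term_mut := Induction for term Sort Prop.

Definition liftv (c x : nat) := if x <? c then x else S x.
Lemma lift_var c x : lift c (Var x) = Var (liftv c x).
Proof. unfold liftv; simpl; destruct (x <? c); reflexivity. Qed.

Lemma lift_vt : (forall V, value V -> forall c, value (lift c V)) /\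
                (forall M, term M -> forall c, term (lift c M)).
Proof.
  split; [apply (value_mut (fun V _ => forall c, value (lift c V)) (fun M _ => forall c, term (lift c M)))
         |apply (term_mut (fun V _ => forall c, value (lift c V)) (fun M _ => forall c, term (lift c M)))];
  intros; simpl;
  repeat match goal with |- context [if ?b then _ else _] => destruct b end;
  first [apply t_app|apply t_bang|apply t_let|apply t_nu|apply t_set|apply t_pset|apply t_get|apply t_par|constructor]; auto.
Qed.
Lemma lift_value V c : value V -> value (lift c V). Proof. intros; apply lift_vt; auto. Qed.
Lemma lift_term M c : term M -> term (lift c M). Proof. intros; apply lift_vt; auto. Qed.

Lemma lift_store S c : store S -> store (lift c S).
Proof. induction 1; simpl;
  repeat match goal with |- context [if ?b then _ else _] => destruct b end;
  constructor; auto using lift_value. Qed.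

Lemma term_not_store M : term M -> store M -> False.
Proof. induction 1; intros Hs; inversion Hs; subst; auto.
  all: inversion H; subst; inversion Hs. Qed.

Lemma plug_lift c E t : lift c (plug E t) = plug (lift_ectx c E) (lift c t).
Proof. induction E; simpl; congruence. Qed.
Lemma ectx_ok_lift c E : ectx_ok E -> ectx_ok (lift_ectx c E).
Proof. induction E; simpl; intuition auto using lift_value, lift_term. Qed.
Lemma term_plug E t : ectx_ok E -> term t -> term (plug E t).
Proof. induction E; simpl; intuition;
  first [apply t_app|apply t_bang|apply t_let]; auto; constructor; auto. Qed.

Fixpoint size (t : tm) : nat :=
  match t with
  | Unit | Var _ => 1
  | Lam M | Bang M | Nu M | Get M => S (size M)
  | App M N | Let M N | SetT M N | PSetT M N | Par M N | Sto M N | PSto M N => S (size M + size N)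
  end.
Lemma size_lift c t : size (lift c t) = size t.
Proof. revert c; induction t; intros; simpl; auto;
  try (destruct (n <? c); reflexivity); rewrite ?IHt, ?IHt1, ?IHt2; auto. Qed.
Lemma size_extr E c M : S (size (plug (lift_ectx c E) M)) = size (plug E (Nu M)).
Proof. induction E; simpl; rewrite ?size_lift; simpl in *; lia. Qed.

Definition scons (o : option vty) (g : nat -> option vty) : nat -> option vty :=
  fun n => match n with 0 => o | S k => g k end.

Inductive sty : (nat -> option vty) -> tm -> ty -> Prop :=
| s_var g x A : g x = Some A -> sty g (Var x) (TV A)
| s_unit g : sty g Unit (TV TUnit)
| s_lam g M A a : sty g (Lam M) (TV (TArr A a))
| s_bang g M A : sty g M (TV A) -> sty g (Bang M) (TV (TBang A))
| s_app g M N A a : sty g M (TV (TArr A a)) -> sty g N (TV A) -> sty g (App M N) a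
| s_let g M N A a : sty g M (TV (TBang A)) -> sty g (Let M N) a
| s_nu g P r A a : sty (scons (Some (TReg r A)) g) P a -> sty g (Nu P) a
| s_get g x a : sty g (Get x) a
| s_set g x V a : sty g (SetT x V) a
| s_pset g x V a : sty g (PSetT x V) a
| s_sto g x V a : sty g (Sto x V) a
| s_psto g x V A a : sty g V (TV (TBang A)) -> sty g (PSto x V) a
| s_par g P Q a1 a2 a : sty g P a1 -> sty g Q a2 -> (store P \/ store Q \/ a = TB) ->
    sty g (Par P Q) a.

Lemma sty_weak g N b : sty g N b -> forall c g', (forall n, g' (liftv c n) = g n) ->
  sty g' (lift c N) b.
Proof.
  induction 1; intros c g' Hg; simpl.
  - rewrite <- Hg in H. unfold liftv in H. destruct (x <? c); constructor; auto.
  - constructor.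
  - constructor.
  - constructor; auto.
  - econstructor; eauto.
  - econstructor; eauto.
  - econstructor. apply IHsty. intros [|n]; unfold liftv; simpl; auto.
    specialize (Hg n). unfold liftv in Hg. replace (S n <? S c) with (n <? c) by reflexivity. destruct (n <? c); simpl; auto.
  - constructor.
  - constructor.
  - constructor.
  - constructor.
  - econstructor; eauto.
  - econstructor; eauto. intuition auto using lift_store.
Qed.

Lemma sty_extr g E M a : sty g (plug E (Nu M)) a ->
  exists r A, sty (scons (Some (TReg r A)) g) (plug (lift_ectx 0 E) M) a.
Proof.
  assert (Hw : forall o N b, sty g N b -> sty (scons o g) (lift 0 N) b).
  { intros; eapply sty_weak; eauto. }
  revert a; induction E; intros a H; simpl in *.
  - inversion H; subst; eauto.
  - inversion H; subst; match goal with Hp : sty _ (plug E _) _ |- _ => destruct (IHE _ Hp) as [r [A' HH]] end; exists r, A'; econstructor; eauto.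
  - inversion H; subst; match goal with Hp : sty _ (plug E _) _ |- _ => destruct (IHE _ Hp) as [r [A' HH]] end; exists r, A'; econstructor; eauto.
  - inversion H; subst; match goal with Hp : sty _ (plug E _) _ |- _ => destruct (IHE _ Hp) as [r [A' HH]] end; exists r, A'; econstructor; eauto.
  - inversion H; subst; match goal with Hp : sty _ (plug E _) _ |- _ => destruct (IHE _ Hp) as [r [A' HH]] end; exists r, A'; econstructor; eauto.
Qed.

Lemma sty_plug g E X a : sty g (plug E X) a ->
  (E = EHole /\ sty g X a) \/ exists A, sty g X (TV A).
Proof.
  revert a; induction E; intros a H; simpl in *; auto;
  inversion H; subst;
  match goal with H : sty _ (plug E X) _ |- _ => destruct (IHE _ H) as [[-> ?]|?]; eauto end.
Qed.

Lemma clookup_cons0 e G : clookup (e :: G) 0 = e. Proof. reflexivity. Qed.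
Lemma clookup_consS e G x : clookup (e :: G) (S x) = clookup G x. Proof. reflexivity. Qed.

Lemma csum_l G1 G2 G x u A : csum G1 G2 G -> clookup G1 x = Some (u,A) ->
  exists u', clookup G x = Some (u', A).
Proof. intros H H1. specialize (H x). unfold osum_c in H. rewrite H1 in H.
  destruct (clookup G2 x) as [[u2 A2]|].
  - destruct H as [HA [u0 [_ Hc]]]. eauto.
  - eauto. Qed.
Lemma csum_r G1 G2 G x u A : csum G1 G2 G -> clookup G2 x = Some (u,A) ->
  exists u', clookup G x = Some (u', A).
Proof. intros H H1. specialize (H x). unfold osum_c in H. rewrite H1 in H.
  destruct (clookup G1 x) as [[u2 A2]|].
  - destruct H as [HA [u0 [_ Hc]]]. subst. eauto.
  - eauto. Qed.

Ltac sub Hg := match goal with Hc : csum _ _ _, Hl : clookup _ _ = Some _ |- _ =>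
  solve [destruct (csum_l _ _ _ _ _ _ Hc Hl) as [? Hu]; eapply Hg; [|exact Hu]; simpl; tauto
        | destruct (csum_r _ _ _ _ _ _ Hc Hl) as [? Hu]; eapply Hg; [|exact Hu]; simpl; tauto] end.

Lemma typed_sty R G P a : typed R G P a -> forall g,
  (forall x u A, occurs_free x P -> clookup G x = Some (u, A) -> g x = Some A) ->
  sty g P a.
Proof.
  induction 1; intros g Hg; simpl in *.
  - constructor. eapply Hg; eauto.
  - constructor.
  - constructor.
  - econstructor; [apply IHtyped1|apply IHtyped2]; intros x u A0 Ho Hl; sub Hg.
  - constructor. apply IHtyped. intros x u A0 Ho Hl; sub Hg.
  - econstructor. apply IHtyped1. intros x u A0 Ho Hl; sub Hg.
  - apply s_nu with (r:=r) (A:=A). apply IHtyped. intros [|x] u0 A0 Ho Hl; simpl.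
    + rewrite clookup_cons0 in Hl. congruence.
    + rewrite clookup_consS in Hl. eauto.
  - constructor.
  - constructor.
  - constructor.
  - constructor.
  - econstructor. apply IHtyped. intros x0 u0 A0 Ho Hl; sub Hg.
  - econstructor; [apply IHtyped1|apply IHtyped2|auto]; intros x u A0 Ho Hl; sub Hg.
  - econstructor; [apply IHtyped2|apply IHtyped1|auto]; intros x u A0 Ho Hl; sub Hg.
  - econstructor; [apply IHtyped1|apply IHtyped2|auto]; intros x u A0 Ho Hl; sub Hg.
Qed.

Lemma steq_nu_n m X Y : steq X Y -> steq (nu_n m X) (nu_n m Y).
Proof. induction m; simpl; auto using eq_nu. Qed.
Lemma nu_n_add m1 m2 X : nu_n m1 (nu_n m2 X) = nu_n (m1 + m2) X.
Proof. induction m1; simpl; congruence. Qed.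

Lemma par_list_cons x l : l <> [] -> par_list (x :: l) = Par x (par_list l).
Proof. destruct l; [congruence|reflexivity]. Qed.

Lemma par_list_app l1 l2 : l1 <> [] -> l2 <> [] ->
  steq (par_list (l1 ++ l2)) (Par (par_list l1) (par_list l2)).
Proof.
  intros H1 H2. induction l1 as [|x l1 IH]; [congruence|].
  destruct l1 as [|y l1].
  - change ([x] ++ l2) with (x :: l2). rewrite par_list_cons by auto. apply eq_refl.
  - change ((x :: y :: l1) ++ l2) with (x :: ((y :: l1) ++ l2)).
    rewrite par_list_cons by (simpl; congruence).
    rewrite (par_list_cons x (y :: l1)) by congruence.
    eapply eq_trans; [apply eq_parR, IH; congruence|].
    apply eq_sym, eq_assoc.
Qed.

Lemma perm_steq l l' : Permutation l l' -> l <> [] -> steq (par_list l) (par_list l').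
Proof.
  induction 1; intros Hne.
  - apply eq_refl.
  - destruct l as [|y l].
    + apply Permutation_nil in H. subst. apply eq_refl.
    + assert (l' <> []) by (intro; subst; apply Permutation_sym, Permutation_nil in H; congruence).
      rewrite (par_list_cons x l') by congruence. rewrite (par_list_cons x (y :: l)) by congruence. apply eq_parR, IHPermutation; congruence.
  - destruct l as [|z l].
    + simpl. apply eq_comm.
    + rewrite !par_list_cons by congruence.
      eapply eq_trans; [apply eq_sym, eq_assoc|].
      eapply eq_trans; [apply eq_parL, eq_comm|]. apply eq_assoc.
  - assert (l' <> []) by (intro; subst; apply Permutation_sym, Permutation_nil in H; congruence).
    eapply eq_trans; [apply IHPermutation1|apply IHPermutation2]; auto.
Qed.

Fixpoint liftc (c k : nat) (Q : tm) : tm :=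
  match k with 0 => Q | S k => liftc c k (lift c Q) end.

Lemma extr_n m X Q : steq (Par (nu_n m X) Q) (nu_n m (Par X (liftc 0 m Q))).
Proof.
  revert Q; induction m; intros Q; simpl; [apply eq_refl|].
  eapply eq_trans; [apply eq_extr|]. apply eq_nu, IHm.
Qed.

Lemma lift_nu_n c m Y : lift c (nu_n m Y) = nu_n m (lift (m + c) Y).
Proof. revert c; induction m; intros c; simpl; auto. rewrite IHm. f_equal. f_equal. f_equal. lia. Qed.
Lemma liftc_nu_n c k m Y : liftc c k (nu_n m Y) = nu_n m (liftc (m + c) k Y).
Proof. revert Y; induction k; intros Y; simpl; auto. rewrite lift_nu_n, IHk. reflexivity. Qed.

Lemma lift_par_list c l : lift c (par_list l) = par_list (map (lift c) l).
Proof. induction l as [|x l IH]; simpl; auto. destruct l; simpl in *; auto. rewrite IH. reflexivity. Qed.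
Lemma liftc_par_list c k l : liftc c k (par_list l) = par_list (map (liftc c k) l).
Proof. revert l; induction k; intros l; simpl. rewrite map_id; auto.
  rewrite lift_par_list, IHk, map_map. reflexivity. Qed.

Definition good (M : tm) : Prop :=
  value M \/ exists E y, ectx_ok E /\ M = plug E (Get (Var y)).
Definition pgood (S : tm) : Prop :=
  forall x V, S = PSto x V -> exists V', V = Bang V' /\ value V'.
Definition sgood (S : tm) : Prop := store_item S /\ pgood S.

Lemma good_lift c M : good M -> good (lift c M).
Proof. intros [H|[E [y [HE ->]]]]; [left; auto using lift_value|right].
  exists (lift_ectx c E), (liftv c y). split; auto using ectx_ok_lift.
  rewrite plug_lift. change (lift c (Get (Var y))) with (Get (lift c (Var y))). rewrite lift_var. reflexivity. Qed.
Lemma sgood_lift c S : sgood S -> sgood (lift c S).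
Proof. intros [[x [V [HV [->| ->]]]] Hp].
  - change (lift c (Sto (Var x) V)) with (Sto (lift c (Var x)) (lift c V)); rewrite lift_var.
    split. exists (liftv c x), (lift c V). auto using lift_value.
    intros x0 V0 H; discriminate.
  - change (lift c (PSto (Var x) V)) with (PSto (lift c (Var x)) (lift c V)); rewrite lift_var.
    split. exists (liftv c x), (lift c V). auto using lift_value.
    intros x0 V0 H. injection H as _ <-. destruct (Hp _ _ Logic.eq_refl) as [V' [-> HV']].
    simpl. exists (lift c V'). auto using lift_value.
Qed.
Lemma good_liftc c k M : good M -> good (liftc c k M).
Proof. revert M; induction k; simpl; auto using good_lift. Qed.
Lemma sgood_liftc c k M : sgood M -> sgood (liftc c k M).
Proof. revert M; induction k; simpl; auto using sgood_lift. Qed.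

Definition NF (P : tm) : Prop :=
  exists m Ms Ss, Ms ++ Ss <> [] /\ Forall sgood Ss /\ Forall good Ms /\
    steq P (nu_n m (par_list (Ms ++ Ss))).

Lemma merge P Q : NF P -> NF Q -> NF (Par P Q).
Proof.
  intros [m1 [Ms1 [Ss1 [Hn1 [HS1 [HM1 H1]]]]]] [m2 [Ms2 [Ss2 [Hn2 [HS2 [HM2 H2]]]]]].
  set (f := liftc 0 m2). set (h := liftc m2 m1).
  exists (m1 + m2), (map f Ms1 ++ map h Ms2), (map f Ss1 ++ map h Ss2).
  split; [|split; [|split]].
  - intro Hc. apply app_eq_nil in Hc as [Ha Hb]. apply app_eq_nil in Ha as [Ha1 Ha2]. apply app_eq_nil in Hb as [Hb1 Hb2]. apply map_eq_nil in Ha1. apply map_eq_nil in Hb1. subst. simpl in Hn1. congruence.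
  - apply Forall_app; split; apply Forall_map; eapply Forall_impl; eauto; intros; apply sgood_liftc; auto.
  - apply Forall_app; split; apply Forall_map; eapply Forall_impl; eauto; intros; apply good_liftc; auto.
  - set (X := par_list (Ms1 ++ Ss1)) in *. set (Y := par_list (Ms2 ++ Ss2)) in *.
    eapply eq_trans; [apply eq_parL, H1|].
    eapply eq_trans; [apply eq_parR, H2|].
    eapply eq_trans; [apply extr_n|].
    rewrite liftc_nu_n, Nat.add_0_r, <- nu_n_add. apply steq_nu_n.
    eapply eq_trans; [apply eq_comm|].
    eapply eq_trans; [apply extr_n|]. apply steq_nu_n.
    eapply eq_trans; [apply eq_comm|].
    subst X Y. rewrite !liftc_par_list.
    assert (Ha : map f (Ms1 ++ Ss1) <> []) by (destruct Ms1, Ss1; simpl in *; congruence).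
    assert (Hb : map h (Ms2 ++ Ss2) <> []) by (destruct Ms2, Ss2; simpl in *; congruence).
    eapply eq_trans; [apply eq_sym, par_list_app; auto|].
    apply perm_steq.
    + rewrite !map_app.
      rewrite <- !app_assoc. apply Permutation_app_head.
      rewrite !app_assoc. apply Permutation_app_tail. apply Permutation_app_comm.
    + intro Hc. apply app_eq_nil in Hc. tauto.
Qed.

Definition irred (P : tm) : Prop := forall P', ~ red P P'.

Fixpoint scomp (C C' : sctx) : sctx :=
  match C with
  | SHole => C'
  | SParL C P => SParL (scomp C C') P
  | SParR P C => SParR P (scomp C C')
  | SNu C => SNu (scomp C C')
  end.
Lemma splug_comp C C' t : splug C (splug C' t) = splug (scomp C C') t.
Proof. induction C; simpl; congruence. Qed.
Lemma steq_splug C X Y : steq X Y -> steq (splug C X) (splug C Y).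
Proof. induction C; simpl; intros; auto using eq_parL, eq_parR, eq_nu. Qed.

Lemma irred_sub P C Q : irred P -> steq P (splug C Q) -> irred Q.
Proof.
  intros HP Heq Q' [C' [D [D' [Hb [H1 H2]]]]].
  apply (HP (splug C Q')). exists (scomp C C'), D, D'. split; auto. split.
  - eapply eq_trans; [exact Heq|]. rewrite <- splug_comp. apply steq_splug; auto.
  - rewrite <- splug_comp. apply steq_splug; auto.
Qed.

Lemma red_basic D D' : basic D D' -> red D D'.
Proof. intros. exists SHole, D, D'. simpl. split; auto. split; apply eq_refl. Qed.

Definition redex (X : tm) : Prop :=
  (exists V1 V2, X = App V1 V2 /\ value V1 /\ value V2) \/
  (exists V N, X = Let V N /\ value V) \/
  (exists x V, (X = SetT (Var x) V \/ X = PSetT (Var x) V) /\ value V).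
Definition kind (X : tm) : Prop :=
  (exists M', X = Nu M' /\ term M') \/
  (exists P Q, X = Par P Q /\ term P /\ term Q) \/
  (exists y, X = Get (Var y)) \/ redex X.

Lemma classify M : term M -> value M \/ exists E X, ectx_ok E /\ M = plug E X /\ kind X.
Proof.
  induction 1.
  - auto.
  - right. destruct IHterm1 as [HvM|[E [X [HE [-> HX]]]]].
    + destruct IHterm2 as [HvN|[E [X [HE [-> HX]]]]].
      * exists EHole, (App M N). split; simpl; auto. split; auto. unfold kind, redex; eauto 10.
      * exists (EAppR M E), X. simpl; auto.
    + exists (EAppL E N), X. simpl; auto.
  - destruct IHterm as [Hv|[E [X [HE [-> HX]]]]].
    + left. constructor; auto.
    + right. exists (EBang E), X. simpl; auto.
  - right. destruct IHterm1 as [HvM|[E [X [HE [-> HX]]]]].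
    + exists EHole, (Let M N). simpl. split; auto. split; auto. unfold kind, redex; eauto 10.
    + exists (ELet E N), X. simpl; auto.
  - right. exists EHole, (Nu M). simpl. unfold kind; eauto 10.
  - right. exists EHole, (SetT (Var x) V). simpl. split; auto. split; auto. unfold kind, redex. do 5 right. exists x, V; auto.
  - right. exists EHole, (PSetT (Var x) V). simpl. split; auto. split; auto. unfold kind, redex. do 5 right. exists x, V; auto.
  - right. exists EHole, (Get (Var x)). simpl. unfold kind; eauto 10.
  - right. exists EHole, (Par M N). simpl. unfold kind; eauto 10.
Qed.

Definition regctx (g : nat -> option vty) : Prop :=
  forall x A, g x = Some A -> exists r B, A = TReg r B.

Lemma regctx_cons r A g : regctx g -> regctx (scons (Some (TReg r A)) g).
Proof. intros H [|x] B Hx; simpl in *; [injection Hx as <-; eauto|eauto]. Qed.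

Lemma prog_par P Q : program (Par P Q) -> program P /\ program Q.
Proof. intros H; inversion H; subst; auto.
  - inversion H0; subst; [inversion H1|]. split; apply p_term; auto.
  - inversion H0; subst. split; apply p_store; auto. Qed.
Lemma prog_nu P : program (Nu P) -> program P.
Proof. intros H; inversion H; subst; auto.
  - inversion H0; subst; [inversion H1|]. apply p_term; auto.
  - inversion H0. Qed.

Lemma value_bang g V A : regctx g -> value V -> sty g V (TV (TBang A)) ->
  exists V', V = Bang V' /\ value V'.
Proof. intros Hr Hv Hs. inversion Hv; subst; inversion Hs; subst; eauto.
  match goal with Hx : g _ = Some _ |- _ => destruct (Hr _ _ Hx) as [? [? ?]]; discriminate end. Qed.

Lemma main n : forall P g a, size P < n -> program P -> sty g P a -> regctx g -> irred P -> NF P.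
Proof.
  induction n as [|n IH]; intros P g a Hsz Hp Hs Hr Hi; [lia|].
  assert (HPar : forall P1 P2, P = Par P1 P2 -> program P1 -> program P2 -> NF P).
  { intros P1 P2 -> H1 H2. inversion Hs; subst. simpl in Hsz. apply merge.
    - eapply IH; eauto; [lia|]. eapply (irred_sub _ (SParL SHole P2)); eauto. apply eq_refl.
    - eapply IH; eauto; [lia|]. eapply (irred_sub _ (SParR P1 SHole)); eauto. apply eq_refl. }
  inversion Hp; subst.
  -
    destruct (classify P H) as [Hv|[E [X [HE [-> HX]]]]].
    + exists 0, [P], []. simpl. split; [congruence|]. split; auto. split; [|apply eq_refl].
      constructor; [left; auto|constructor].
    + destruct HX as [[M' [-> HM']]|[[P1 [Q1 [-> [H1 H2]]]]|[[y ->]|Hred]]].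
      *
        destruct (sty_extr _ _ _ _ Hs) as [r [A HA]].
        assert (Heq : steq (plug E (Nu M')) (Nu (plug (lift_ectx 0 E) M'))) by (apply eq_ectx; auto).
        assert (NF (plug (lift_ectx 0 E) M')) as [m [Ms [Ss [Hn [HS [HM Hq]]]]]].
        { eapply IH; eauto.
          - rewrite <- size_extr with (c := 0) in Hsz. lia.
          - apply p_term, term_plug; auto using ectx_ok_lift.
          - apply regctx_cons; auto.
          - eapply (irred_sub _ (SNu SHole)); eauto. }
        exists (S m), Ms, Ss. repeat split; auto. eapply eq_trans; [exact Heq|]. simpl. apply eq_nu; auto.
      * destruct (sty_plug _ _ _ _ Hs) as [[-> Hs']|[A HA]].
        -- eapply HPar; simpl; eauto using p_term.
        -- inversion HA; subst. exfalso. destruct H8 as [Hst|[Hst|Hst]]; try discriminate;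
           first [exact (term_not_store _ H1 Hst) | exact (term_not_store _ H2 Hst)].
      * exists 0, [plug E (Get (Var y))], []. simpl. split; [congruence|]. split; auto.
        split; [|apply eq_refl]. constructor; [right; eauto|constructor].
      * exfalso.
        assert (Hb : exists b, sty g X b) by (destruct (sty_plug _ _ _ _ Hs) as [[_ ?]|[? ?]]; eauto).
        destruct Hb as [b Hb].
        destruct Hred as [[V1 [V2 [-> [Hv1 Hv2]]]]|[[V [N [-> Hv]]]|[x [V [[-> | ->] Hv]]]]].
        -- inversion Hb; subst. inversion Hv1; subst; inversion H3; subst.
           ++ match goal with Hx : g _ = Some _ |- _ => destruct (Hr _ _ Hx) as [? [? ?]]; discriminate end.
           ++ apply (Hi (plug E (subst0 V2 M))). apply red_basic. constructor; auto.
        -- inversion Hb; subst. match goal with Hx : sty _ V (TV (TBang _)) |- _ => destruct (value_bang _ _ _ Hr Hv Hx) as [V' [-> HV']] end.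
           apply (Hi (plug E (subst0 V' N))). apply red_basic. constructor; auto.
        -- apply (Hi (Par (plug E Unit) (Sto (Var x) V))). apply red_basic. constructor; auto.
        -- apply (Hi (Par (plug E Unit) (PSto (Var x) V))). apply red_basic. constructor; auto.
  -
    inversion H; subst.
    + exists 0, [], [Sto (Var x) V]. simpl. split; [congruence|]. split; [|split; [constructor|apply eq_refl]].
      constructor; [|constructor]. split. exists x, V; auto. intros ? ? ?; discriminate.
    + exists 0, [], [PSto (Var x) V]. simpl. split; [congruence|]. split; [|split; [constructor|apply eq_refl]].
      constructor; [|constructor]. split. exists x, V; auto.
      intros ? ? Heq. injection Heq as _ <-. inversion Hs; subst. eapply value_bang; eauto.
    + eapply HPar; eauto using p_store.
  - eapply HPar; eauto.
  - inversion Hs; subst.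
    assert (NF P0) as [m [Ms [Ss [Hn [HS [HM Hq]]]]]].
    { eapply IH; eauto. simpl in Hsz; lia. apply regctx_cons; auto.
      eapply (irred_sub _ (SNu SHole)); eauto. apply eq_refl. }
    exists (S m), Ms, Ss. repeat split; auto. simpl. apply eq_nu; auto.
Qed.

Lemma plug_get_not_value E y : value (plug E (Get y)) -> False.
Proof. induction E; simpl; intros H; inversion H; auto. Qed.

Lemma plug_get_unique E E' y y' : ectx_ok E -> ectx_ok E' ->
  plug E (Get (Var y)) = plug E' (Get (Var y')) -> E' = E /\ y' = y.
Proof.
  revert E'; induction E; intros E' HE HE' Heq; destruct E'; simpl in *; try discriminate.
  - injection Heq; auto.
  - injection Heq as H1 H2. destruct (IHE E' (proj1 HE) (proj1 HE') H1) as [-> ->]. subst; auto.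
  - injection Heq as H1 H2. exfalso. destruct HE' as [Hv _]. subst. eapply plug_get_not_value; eauto.
  - injection Heq as H1 H2. exfalso. destruct HE as [Hv _]. subst. eapply plug_get_not_value; eauto.
  - injection Heq as H1 H2. destruct (IHE E' (proj2 HE) (proj2 HE') H2) as [-> ->]. subst; auto.
  - injection Heq as H1. destruct (IHE E' HE HE' H1) as [-> ->]. auto.
  - injection Heq as H1 H2. destruct (IHE E' (proj1 HE) (proj1 HE') H1) as [-> ->]. subst; auto.
Qed.

Fixpoint nuctx (m : nat) (C : sctx) : sctx :=
  match m with 0 => C | S k => SNu (nuctx k C) end.
Lemma splug_nuctx m C t : splug (nuctx m C) t = nu_n m (splug C t).
Proof. induction m; simpl; congruence. Qed.

Lemma perm_in {A} (x : A) l : In x l -> exists l', Permutation l (x :: l').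
Proof. intros H. destruct (in_split _ _ H) as [l1 [l2 ->]]. exists (l1 ++ l2).
  apply Permutation_sym, Permutation_middle. Qed.

Lemma get_store_red P m L M S E y V :
  steq P (nu_n m (par_list L)) -> In M L -> In S L -> M = plug E (Get (Var y)) -> ectx_ok E ->
  value V -> (S = Sto (Var y) V \/ (S = PSto (Var y) V /\ exists V', V = Bang V' /\ value V')) ->
  exists P', red P P'.
Proof.
  intros Heq HM HS -> HE HV HSt.
  destruct (perm_in _ _ HM) as [l1 Hp1].
  assert (HS' : In S l1).
  { apply (Permutation_in _ Hp1) in HS. destruct HS as [HS|HS]; auto.
    exfalso. destruct HSt as [->|[-> _]]; destruct E; discriminate. }
  destruct (perm_in _ _ HS') as [l2 Hp2].
  assert (Hp : Permutation L (plug E (Get (Var y)) :: S :: l2)).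
  { eapply perm_trans; [exact Hp1|]. apply perm_skip; auto. }
  assert (Hst : steq (par_list L) (par_list (plug E (Get (Var y)) :: S :: l2))).
  { apply perm_steq; auto. intro; subst; inversion HM. }
  assert (HC : exists C, steq (par_list (plug E (Get (Var y)) :: S :: l2))
                             (splug C (Par (plug E (Get (Var y))) S))).
  { destruct l2 as [|z l2].
    - exists SHole. apply eq_refl.
    - exists (SParL SHole (par_list (z :: l2))). simpl splug.
      rewrite par_list_cons by congruence. rewrite par_list_cons by congruence.
      apply eq_sym, eq_assoc. }
  destruct HC as [C HC].
  assert (Hb : exists D', basic (Par (plug E (Get (Var y))) S) D').
  { destruct HSt as [->|[-> [V' [-> HV']]]].
    - eexists. apply b_get; auto.
    - eexists. apply b_pget; auto. }
  destruct Hb as [D' Hb].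
  exists (splug (nuctx m C) D'). exists (nuctx m C), (Par (plug E (Get (Var y))) S), D'. split; [exact Hb|]. split; [|apply eq_refl].
  rewrite splug_nuctx. eapply eq_trans; [exact Heq|]. apply steq_nu_n.
  eapply eq_trans; [exact Hst|exact HC].
Qed.

Definition G0 (G : ctx) : nat -> option vty :=
  fun x => match clookup G x with Some (_, TReg r B) => Some (TReg r B) | _ => None end.

Theorem mainTheorem4 (P : tm) (R : rctx) (G : ctx) (a : ty) :
  program P ->
  typed R G P a ->
  (forall x, occurs_free x P -> exists u r A, clookup G x = Some (u, TReg r A)) ->
  (forall P', ~ red P P') ->
  exists (m : nat) (Ms Ss : list tm),
    Ms ++ Ss <> [] /\
    Forall store_item Ss /\
    Forall (fun M =>
      value M \/
      exists (E : ectx) (y : nat),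
        ectx_ok E /\ M = plug E (Get (Var y)) /\
        (forall (E' : ectx) (y' : nat), ectx_ok E' ->
           M = plug E' (Get (Var y')) -> E' = E /\ y' = y) /\
        Forall (fun S => forall V, S <> Sto (Var y) V /\ S <> PSto (Var y) V) Ss)
      Ms /\
    steq P (nu_n m (par_list (Ms ++ Ss))).
Proof.
  intros Hp Hty Hcl Hirr.
  assert (Hs : sty (G0 G) P a).
  { eapply typed_sty; eauto. intros x u A Ho Hl.
    destruct (Hcl x Ho) as [u' [r [B Hl']]]. rewrite Hl in Hl'. injection Hl' as -> ->.
    unfold G0. rewrite Hl. reflexivity. }
  assert (Hr : regctx (G0 G)).
  { intros x A H. unfold G0 in H. destruct (clookup G x) as [[u [| | | r B]]|]; try discriminate.
    injection H as <-. eauto. }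
  destruct (main (S (size P)) P (G0 G) a ltac:(lia) Hp Hs Hr Hirr) as [m [Ms [Ss [Hn [HS [HM Heq]]]]]].
  exists m, Ms, Ss. split; [auto|]. split; [|split; [|exact Heq]].
  - eapply Forall_impl; [|exact HS]. intros S [H _]; exact H.
  - rewrite Forall_forall. intros M HinM. rewrite Forall_forall in HM.
    destruct (HM M HinM) as [Hv|[E [y [HE ->]]]]; [left; auto|right].
    exists E, y. split; auto. split; auto. split.
    + intros E' y' HE' Hq. apply plug_get_unique; auto.
    + rewrite Forall_forall. intros S HinS V. rewrite Forall_forall in HS.
      destruct (HS S HinS) as [[x [V0 [HV0 HSe]]] Hpg].
      split; intro Hc; subst S.
      * destruct HSe as [HSe|HSe]; [|discriminate]. injection HSe as Hx HVe; subst x V0.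
        destruct (get_store_red P m (Ms ++ Ss) (plug E (Get (Var y))) (Sto (Var y) V) E y V Heq) as [P' HP']; auto using in_or_app.
        eapply Hirr; eauto.
      * destruct HSe as [HSe|HSe]; [discriminate|]. injection HSe as Hx HVe; subst x V0.
        destruct (get_store_red P m (Ms ++ Ss) (plug E (Get (Var y))) (PSto (Var y) V) E y V Heq) as [P' HP']; auto using in_or_app.
        right. split; auto. eapply Hpg; reflexivity.
        eapply Hirr; eauto.
Qed.
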